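(* Let $A\in\mathrm{SL}(n,\mathbb{C})$ have Jordan canonical form consisting of Jordan blocks $J(\lambda_1,n_1),\dots,J(\lambda_k,n_k)$ (with all $\lambda_i\neq 0$). Then $A$ is $c$-reversible if and only if this collection of blocks can be partitioned into pairs $\{J(\lambda,m),J(\overline{\lambda}^{-1},m)\}$ with $\lambda\in\mathbb{C}\setminus\{0\}$, $|\lambda|\neq 1$, and singletons $\{J(\mu,m)\}$ with $|\mu|=1$.
   Context: $J(\lambda,m)$ denotes the $m\times m$ Jordan block with eigenvalue $\lambda$ ($\lambda$ on the diagonal, $1$ on the superdiagonal, $0$ elsewhere). $\overline{g}$ denotes entrywise complex conjugation. $g\in\mathrm{SL}(n,\mathbb{C})$ is $c$-reversible if there exists $h\in\mathrm{SL}(n,\mathbb{C})$ with $hgh^{-1}=\overline{g}^{-1}$. *)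

(* Defs.v *)
From HB Require Import structures.
From mathcomp Require Import all_boot all_order all_algebra.
From mathcomp Require Import complex.
From mathcomp Require Import reals.
Set Implicit Arguments. Unset Strict Implicit. Unset Printing Implicit Defensive.
Import Order.TTheory GRing.Theory Num.Theory.
Local Open Scope ring_scope.

Definition jordan_block {F : nzRingType} (lam : F) (m : nat) : 'M[F]_m :=
  \matrix_(i < m, j < m)
     (if i == j then lam else if (j : nat) == i.+1 then 1 else 0).

Definition conj_mx {C : numClosedFieldType} {m n : nat} (g : 'M[C]_(m, n)) :
  'M[C]_(m, n) := map_mx Num.conj g.

Definition in_SL {C : numClosedFieldType} {n : nat} (g : 'M[C]_n) : Prop :=
  \det g = 1.

Definition c_reversible {C : numClosedFieldType} {n : nat} (g : 'M[C]_n) : Prop :=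
  exists h : 'M[C]_n, in_SL h /\ h *m g *m invmx h = invmx (conj_mx g).

Definition has_jordan_form {C : numClosedFieldType} {n k : nat} (A : 'M[C]_n)
  (lam : 'I_k -> C) (m : 'I_k -> nat) : Prop :=
  (forall i, (0 < m i)%N) /\
  exists hn : (\sum_(i < k) m i)%N = n,
  exists P : 'M[C]_n, P \in unitmx /\
    P *m A *m invmx P =
      castmx (hn, hn) (\mxdiag_(i < k) jordan_block (lam i) (m i)).

(* Main.v *)
Require Import Defs.
From HB Require Import structures.
From mathcomp Require Import all_boot all_order all_algebra.
From mathcomp Require Import complex.
From mathcomp Require Import reals.
From mathcomp Require Import fingroup perm.
From mathcomp Require Import zify ring lra.
Set Implicit Arguments. Unset Strict Implicit. Unset Printing Implicit Defensive.
Import Order.TTheory GRing.Theory Num.Theory.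
Local Open Scope ring_scope.
Section Sim.
Variable F : fieldType.

Definition simb n (M M' Q : 'M[F]_n) : bool :=
  (Q \in unitmx) && (Q *m M *m invmx Q == M').
Definition sim n (M M' : 'M[F]_n) : Prop := exists Q, simb M M' Q.

Lemma invmx_uniq n (A B : 'M[F]_n) : A *m B = 1%:M -> invmx A = B.
Proof.
move=> AB; have [uA uB] := mulmx1_unit AB.
by rewrite -[RHS](mulKmx uA) AB mulmx1.
Qed.

Lemma sim_refl n (M : 'M[F]_n) : sim M M.
Proof. by exists 1%:M; rewrite /simb unitmx1 invmx1 mul1mx mulmx1 eqxx. Qed.

Lemma sim_sym n (M M' : 'M[F]_n) : sim M M' -> sim M' M.
Proof.
move=> [Q /andP[uQ /eqP <-]]; exists (invmx Q); rewrite /simb unitmx_inv uQ /=.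
by rewrite invmxK !mulmxA (mulVmx uQ) mul1mx (mulmxKV uQ).
Qed.

Lemma sim_trans n (M1 M2 M3 : 'M[F]_n) : sim M1 M2 -> sim M2 M3 -> sim M1 M3.
Proof.
move=> [Q /andP[uQ /eqP <-]] [Q' /andP[uQ' /eqP <-]]; exists (Q' *m Q).
rewrite /simb.
have -> : invmx (Q' *m Q) = invmx Q *m invmx Q'.
  apply: invmx_uniq; rewrite mulmxA -(mulmxA Q') (mulmxV uQ) mulmx1.
  exact: mulmxV.
by rewrite /simb unitmx_mul uQ uQ' /= !mulmxA.
Qed.
End Sim.

Section Diag.
Variable F : fieldType.
Variables (k : nat) (p_ : 'I_k -> nat).

Lemma mxdiagM (B C : forall i, 'M[F]_(p_ i)) :
  mxdiag B *m mxdiag C = \mxdiag_i (B i *m C i).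
Proof.
rewrite {2}/mxdiag mul_mxdiag_mxblock /mxdiag; apply/eq_mxblock => i j.
case: eqP => [e|_]; last by rewrite mulmx0.
by subst j; rewrite !conform_mx_id.
Qed.

Lemma mxdiag1 : \mxdiag_i (1%:M : 'M[F]_(p_ i)) = 1%:M.
Proof. exact: mxdiagZ. Qed.

Lemma mxdiag_exp (B : forall i, 'M[F]_(p_ i)) n :
  (mxdiag B) ^+ n = \mxdiag_i (B i ^+ n).
Proof.
elim: n => [|n IH]; first by rewrite expr0 -idmxE -mxdiag1; apply: eq_mxdiag => i; rewrite expr0.
by rewrite exprS -mulmxE IH mxdiagM; apply: eq_mxdiag => i; rewrite exprS.
Qed.

Lemma mxdiag_subS (B : forall i, 'M[F]_(p_ i)) (a : F) :
  mxdiag B - a%:M = \mxdiag_i (B i - a%:M).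
Proof. by rewrite mxdiagB mxdiagZ. Qed.

Lemma mxdiag_inv (B : forall i, 'M[F]_(p_ i)) :
  (forall i, B i \in unitmx) ->
  mxdiag B \in unitmx /\ invmx (mxdiag B) = \mxdiag_i invmx (B i).
Proof.
move=> uB.
have h : mxdiag B *m \mxdiag_i invmx (B i) = 1%:M.
  by rewrite mxdiagM -mxdiag1; apply: eq_mxdiag => i; rewrite mulmxV.
by split; [case: (mulmx1_unit h) | apply: invmx_uniq].
Qed.


Lemma sim_mxdiag (B C : forall i, 'M[F]_(p_ i)) :
  (forall i, sim (B i) (C i)) -> sim (mxdiag B) (mxdiag C).
Proof.
move=> h; pose Q i := xchoose (h i).
have hQ i : simb (B i) (C i) (Q i) := xchooseP (h i).
have uQ i : Q i \in unitmx by case/andP: (hQ i).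
have [uD iD] := mxdiag_inv uQ.
exists (mxdiag Q); rewrite /simb uD iD !mxdiagM /=; apply/eqP/eq_mxdiag => i.
by case/andP: (hQ i) => _ /eqP.
Qed.

Lemma map_mxdiag (f : {rmorphism F -> F}) (B : forall i, 'M[F]_(p_ i)) :
  map_mx f (mxdiag B) = \mxdiag_i map_mx f (B i).
Proof.
rewrite /mxdiag /mxblock; apply/matrixP => s t; rewrite !mxE.
move: (tagnat.sig2 s) (tagnat.sig2 t); move: (tagnat.sig1 s) (tagnat.sig1 t) => i j a b.
case: eqP => [e|_]; last by rewrite !mxE rmorph0.
by subst j; rewrite !conform_mx_id mxE.
Qed.


Lemma mxdiag_fE (f : 'I_k -> nat -> nat -> F) s t :
  (\mxdiag_i (\matrix_(a < p_ i, b < p_ i) f i a b)) s t =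
  if tagnat.sig1 s == tagnat.sig1 t
  then f (tagnat.sig1 s) (tagnat.sig2 s) (tagnat.sig2 t) else 0.
Proof.
rewrite /mxdiag /mxblock !mxE.
move: (tagnat.sig2 s) (tagnat.sig2 t); move: (tagnat.sig1 s) (tagnat.sig1 t) => i j a b.
case: eqP => [e|_]; last by rewrite !mxE.
by subst j; rewrite !conform_mx_id mxE.
Qed.

Lemma perm_mx_inv n (s : 'S_n) : invmx (perm_mx s : 'M[F]_n) = perm_mx s^-1.
Proof. by apply: invmx_uniq; rewrite -perm_mxM mulgV perm_mx1. Qed.

Lemma sim_perm_mxdiag (sg : 'I_k -> 'I_k) (f : 'I_k -> nat -> nat -> F) :
  injective sg -> (forall i, p_ (sg i) = p_ i) ->
  sim (\mxdiag_i (\matrix_(a < p_ i, b < p_ i) f i a b))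
      (\mxdiag_i (\matrix_(a < p_ i, b < p_ i) f (sg i) a b)).
Proof.
move=> sginj hm.
have lt i (a : 'I_(p_ i)) : (a < p_ (sg i))%N by rewrite hm.
pose t0 (s : 'I_(\sum_i p_ i)) : 'I_(\sum_i p_ i) :=
  @tagnat.Rank _ p_ (sg (tagnat.sig1 s)) (Ordinal (lt _ (tagnat.sig2 s))).
have t1 s : tagnat.sig1 (t0 s) = sg (tagnat.sig1 s) by rewrite tagnat.Rank1K.
have t2 s : (tagnat.sig2 (t0 s) : nat) = tagnat.sig2 s by rewrite tagnat.Rank2K.
have tinj : injective t0.
  move=> s s' e; rewrite -(tagnat.sig2K s) -(tagnat.sig2K s'); apply: val_inj; apply/eqP.
  rewrite tagnat.eq_Rank; apply/andP; split.
    by rewrite -(inj_eq sginj) -t1 -t1 e.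
  by rewrite -(t2 s) -(t2 s') e.
exists (perm_mx (perm tinj)); rewrite /simb unitmx_perm /= perm_mx_inv.
rewrite -col_permE -row_permE; apply/eqP/matrixP => s s'.
have E1 (X : 'M[F]_(\sum_i p_ i)) : col_perm (perm tinj) (row_perm (perm tinj) X) s s' = X (t0 s) (t0 s').
  by rewrite !mxE !permE.
rewrite E1 !mxdiag_fE (t2 s) (t2 s') (t1 s) (t1 s') (inj_eq sginj).
by rewrite (mxdiag_fE (fun i => f (sg i))).
Qed.

End Diag.
Section Jordan.
Variable F : fieldType.

Definition shN m : 'M[F]_m := jordan_block 0 m.

Lemma jbE (c : F) m : jordan_block c m = c%:M + shN m.
Proof.
apply/matrixP => i j; rewrite !mxE; case: (i == j); first by rewrite mulr1n addr0.
by rewrite mulr0n add0r.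
Qed.

Lemma shN_exp m p (i j : 'I_m) : (shN m ^+ p) i j = ((j : nat) == i + p)%N%:R.
Proof.
elim: p i j => [|p IH] i j.
  by rewrite expr0 !mxE addn0 eq_sym.
rewrite exprSr -mulmxE mxE.
case: (ltnP (i + p)%N m) => hlt.
  rewrite (bigD1 (Ordinal hlt)) //= big1 ?addr0.
    rewrite IH !mxE /= eqxx mul1r addnS.
    case: eqP => [<-|_] /=; last by case: (_ == _).
    by have -> : ((i + p)%N == (i + p).+1) = false by lia.
  move=> l /eqP hl; rewrite IH; case: eqP => [e|]; last by rewrite mul0r.
  by case: hl; apply: val_inj; rewrite /= e.
rewrite big1; first by case: eqP => // e; move: (ltn_ord j); rewrite e addnS; lia.
move=> l _; rewrite IH; case: eqP => [e|]; last by rewrite mul0r.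
move: (ltn_ord l); lia.
Qed.

Lemma det_jb (c : F) m : \det (jordan_block c m) = c ^+ m.
Proof.
rewrite -det_tr det_trig.
  by rewrite (eq_bigr (fun _ => c)) ?prodr_const ?card_ord // => i _; rewrite !mxE eqxx.
apply/is_trig_mxP => i j ij; rewrite !mxE.
have -> : (j == i) = false by apply/negbTE; rewrite neq_ltn ij orbT.
by have -> : ((i : nat) == j.+1) = false by lia.
Qed.

Lemma unit_jb (c : F) m : c != 0 -> jordan_block c m \in unitmx.
Proof. by move=> c0; rewrite unitmxE det_jb unitfE expf_neq0. Qed.

Lemma rank_shN_exp m p : \rank (shN m ^+ p) = (m - p)%N.
Proof.
case: m => [|m]; first by rewrite flatmx0 mxrank0.
pose f (i : 'I_m.+1) : 'I_m.+1 := Ordinal (@ltn_pmod (i + p)%N m.+1 isT).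
have finj : injective f.
  move=> i j /(congr1 val) /= /eqP; rewrite eqn_modDr !modn_small //.
  by move/eqP/val_inj.
have -> : shN m.+1 ^+ p = pid_mx (m.+1 - p) *m perm_mx (perm finj).
  apply/matrixP => i j; rewrite shN_exp mxE (bigD1 i) //= big1 ?addr0.
    rewrite !mxE eqxx /= permE.
    case: (ltnP i (m.+1 - p)) => h; rewrite ?mul1r ?mul0r.
      congr (_%:R); rewrite /f -(inj_eq val_inj) /= modn_small; first by rewrite eq_sym.
      lia.
    by case: eqP => // e; move: (ltn_ord j); lia.
  move=> l /negbTE li; rewrite !mxE.
  by case: eqP => [/val_inj e|]; [move: li; rewrite e eqxx | rewrite mul0r].
rewrite mxrankMfree ?row_free_unit ?unitmx_perm // rank_pid_mx //; lia.
Qed.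


Lemma exp_unitmx m (A : 'M[F]_m) p : A \in unitmx -> A ^+ p \in unitmx.
Proof.
move=> uA; elim: p => [|p IH]; first by rewrite expr0 unitmx1.
by rewrite exprS -mulmxE unitmx_mul uA IH.
Qed.

Lemma jb_sub (a mu : F) m : jordan_block a m - mu%:M = jordan_block (a - mu) m.
Proof.
rewrite !jbE; apply/matrixP => i j; rewrite !mxE.
by case: (i == j); rewrite /= ?mulr1n ?mulr0n; ring.
Qed.

Lemma rank_jb (a mu : F) m p :
  \rank ((jordan_block a m - mu%:M) ^+ p) = if a == mu then (m - p)%N else m.
Proof.
rewrite jb_sub; case: eqP => [->|/eqP ne]; first by rewrite subrr rank_shN_exp.
by rewrite mxrank_unit // exp_unitmx // unit_jb // subr_eq0.
Qed.

Lemma nil_sim m (M : 'M[F]_m) : M ^+ m = 0 -> M ^+ m.-1 != 0 -> sim M (shN m).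
Proof.
move=> Mm Mm1.
have [r hr] : exists r, row r (M ^+ m.-1) != 0.
  case: (pickP (fun r => row r (M ^+ m.-1) != 0)) => [r hr|none]; first by exists r.
  case/negP: Mm1; apply/eqP/row_matrixP => i; rewrite row0.
  by move/negbT: (none i); rewrite negbK => /eqP.
pose Q : 'M[F]_m := \matrix_(i, j) (M ^+ i) r j.
have rowQ i : row i Q = row r (M ^+ i) by apply/rowP => j; rewrite !mxE.
have QM : Q *m M = shN m *m Q.
  apply/matrixP => i j.
  have -> : (Q *m M) i j = (M ^+ i.+1) r j.
    rewrite mxE exprSr -mulmxE mxE; apply: eq_bigr => l _; by rewrite mxE.
  rewrite mxE.
  case: (ltnP i.+1 m) => hi.
    rewrite (bigD1 (Ordinal hi)) //= big1 ?addr0.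
      by rewrite -[shN m]expr1 shN_exp /= addn1 eqxx mul1r mxE.
    move=> l /eqP hl; rewrite -[shN m]expr1 shN_exp; case: eqP => [e|]; last by rewrite mul0r.
    by case: hl; apply: val_inj; rewrite /= e addn1.
  rewrite big1.
    have -> : i.+1 = (m + (i.+1 - m))%N by lia.
    by rewrite exprD Mm mul0r mxE.
  move=> l _; rewrite -[shN m]expr1 shN_exp; case: eqP => [e|]; last by rewrite mul0r.
  move: (ltn_ord l); lia.
have uQ : Q \in unitmx.
  rewrite -row_free_unit -kermx_eq0; apply/eqP/row_matrixP => i; rewrite row0.
  move: (row i (kermx Q)) (row_sub i (kermx Q)) => w /sub_kermxP wQ.
  have Hsum : forall s : nat, \sum_l w 0 l *: row r (M ^+ (l + s)) = 0.
    move=> s; have := congr1 (mulmx^~ (M ^+ s)) wQ.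
    rewrite /= mul0mx (mulmx_sum_row w) mulmx_suml => h; apply: eq_trans h.
    apply: eq_bigr => l _; by rewrite -scalemxAl rowQ -row_mul exprD mulmxE.
  suff H : forall (t : nat) (ht : (t < m)%N), w 0 (Ordinal ht) = 0.
    apply/rowP => j; rewrite mxE -(H j (ltn_ord j)); congr (w _ _); exact: val_inj.
  elim/ltn_ind => t IH ht.
  have := Hsum (m.-1 - t)%N; rewrite (bigD1 (Ordinal ht)) //= big1 ?addr0.
    have -> : (t + (m.-1 - t))%N = m.-1 by lia.
    by move/eqP; rewrite scaler_eq0 (negbTE hr) orbF => /eqP.
  move=> l /eqP hl; case: (ltngtP l t) => [lt|gt|eq].
  - rewrite (_ : w 0 l = 0) ?scale0r // -(IH l lt (ltn_ord l)); congr (w _ _); exact: val_inj.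
  - have -> : (l + (m.-1 - t))%N = (m + (l + m.-1 - t - m))%N by lia.
    by rewrite exprD Mm mul0r row0 scaler0.
  - by case: hl; apply: val_inj.
exists Q; rewrite /simb uQ /= QM mulmxK //.
Qed.


Lemma sim_addS m (M M' : 'M[F]_m) (a : F) : sim M M' -> sim (M + a%:M) (M' + a%:M).
Proof.
move=> [Q /andP[uQ /eqP <-]]; exists Q; rewrite /simb uQ /=.
by rewrite mulmxDr mulmxDl scalar_mxC -(mulmxA a%:M) (mulmxV uQ) mulmx1.
Qed.

Lemma jinv_sim (c : F) m : c != 0 -> (0 < m)%N ->
  sim (invmx (jordan_block c m)) (jordan_block c^-1 m).
Proof.
move=> c0; case: m => [//|m] _; set J := jordan_block c m.+1; set N := shN m.+1.
have uJ : J \in unitmx by exact: unit_jb.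
have JN : J *m N = N *m J by rewrite /J jbE mulmxDl mulmxDr scalar_mxC.
have iJN : invmx J *m N = N *m invmx J.
  have := congr1 (fun X => invmx J *m X *m invmx J) JN.
  by rewrite /= !mulmxA (mulVmx uJ) mul1mx (mulmxK uJ) => e; rewrite e.
set M := invmx J - c^-1%:M.
have eM : M = - c^-1 *: (invmx J *m N).
  have JM : J *m M = - c^-1 *: N.
    rewrite /M mulmxBr (mulmxV uJ) mul_mx_scalar /J jbE scalerDr.
    rewrite scale_scalar_mx mulVf // scaleNr; by rewrite opprD addrA subrr add0r.
  by rewrite -(mulKmx uJ M) JM scalemxAr.
have Mp p : M ^+ p = (- c^-1) ^+ p *: (invmx J ^+ p *m N ^+ p).
  rewrite eM exprZn; congr (_ *: _); rewrite mulmxE exprMn_comm //.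
have Nm : N ^+ m.+1 = 0.
  apply/matrixP => i j; rewrite shN_exp mxE.
  by case: eqP => // e; move: (ltn_ord j); rewrite e; lia.
have Nm1 : N ^+ m != 0.
  apply/eqP => /matrixP /(_ ord0 ord_max).
  by rewrite shN_exp mxE /= add0n eqxx => /eqP; rewrite oner_eq0.
have /nil_sim : M ^+ m.+1 = 0 by rewrite Mp Nm mulmx0 scaler0.
case.
  rewrite Mp scaler_eq0 negb_or expf_neq0 ?oppr_eq0 ?invr_eq0 //=.
  apply: contra Nm1 => /eqP e; apply/eqP.
  have uJp : invmx J ^+ m \in unitmx by rewrite exp_unitmx ?unitmx_inv.
  by rewrite -(mulKmx uJp (N ^+ m)) e mulmx0.
move=> Q hQ; have := sim_addS c^-1 (ex_intro _ Q hQ).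
by rewrite /M subrK /J /N [jordan_block c^-1 m.+1]jbE addrC.
Qed.

End Jordan.

Section SimMore.
Variable F : fieldType.

Lemma rank_conjg n (Q X : 'M[F]_n) : Q \in unitmx -> \rank (Q *m X *m invmx Q) = \rank X.
Proof.
move=> uQ; rewrite mxrankMfree ?row_free_unit ?unitmx_inv //.
by rewrite -mxrank_tr trmx_mul mxrankMfree ?mxrank_tr // row_free_unit unitmx_tr.
Qed.

Lemma sim_exp n (X Y : 'M[F]_n) p : sim X Y -> sim (X ^+ p) (Y ^+ p).
Proof.
move=> [Q /andP[uQ /eqP <-]]; exists Q; rewrite /simb uQ /=; apply/eqP.
elim: p => [|p IH]; first by rewrite !expr0 -idmxE mulmx1 mulmxV.
by rewrite !exprS -IH -!mulmxE !mulmxA (mulmxKV uQ) -!mulmxA.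
Qed.

Lemma sim_rank n (X Y : 'M[F]_n) (mu : F) p : sim X Y ->
  \rank ((X - mu%:M) ^+ p) = \rank ((Y - mu%:M) ^+ p).
Proof.
move=> /(sim_addS (- mu)) /(sim_exp p); rewrite raddfN => -[Q /andP[uQ /eqP <-]].
by rewrite rank_conjg.
Qed.

Lemma invmx_conjg n (Q X : 'M[F]_n) : Q \in unitmx ->
  invmx (Q *m X *m invmx Q) = Q *m invmx X *m invmx Q.
Proof.
move=> uQ; case uX : (X \in unitmx).
  apply: invmx_uniq; rewrite !mulmxA (mulmxKV uQ) -(mulmxA _ X) (mulmxV uX) mulmx1.
  exact: mulmxV.
have nu : Q *m X *m invmx Q \notin unitmx by rewrite !unitmx_mul uX /= andbF.
by rewrite [invmx (Q *m _ *m _)]invmx_out ?inE // [invmx X]invmx_out ?inE ?uX.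
Qed.

End SimMore.

Section CC.
Variable C : numClosedFieldType.

Definition phi (z : C) := (Num.conj z)^-1.

Lemma phiK : involutive phi.
Proof. by move=> z; rewrite /phi fmorphV invrK; exact: conjCK. Qed.

Lemma phi_id (z : C) : `|z| = 1 -> phi z = z.
Proof.
by move=> hz; rewrite /phi invC_norm conjCK norm_conjC hz expr1n invr1 mul1r.
Qed.

Lemma phi_neq (z : C) : z != 0 -> `|z| != 1 -> phi z != z.
Proof.
move=> z0 hz; apply: contra hz => /eqP e.
have h : `|z| ^+ 2 = 1.
  by rewrite normCK -{1}e /phi mulVf // conjC_eq0.
move/eqP: h; rewrite sqrf_eq1 => /orP[//|/eqP h].
by move: (normr_ge0 z); rewrite h ler0N1.
Qed.

Lemma conj_jb (c : C) m : conj_mx (jordan_block c m) = jordan_block c^* m.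
Proof.
apply/matrixP => i j; rewrite !mxE.
by case: (i == j) => //; case: (_ == _); rewrite ?rmorph1 ?rmorph0.
Qed.

Lemma sim_conjinv n (X Y : 'M[C]_n) : sim X Y -> sim (invmx (conj_mx X)) (invmx (conj_mx Y)).
Proof.
move=> [Q /andP[uQ /eqP <-]]; exists (conj_mx Q).
have uQ' : conj_mx Q \in unitmx by rewrite /conj_mx map_unitmx.
rewrite /simb uQ' /= /conj_mx !map_mxM map_invmx invmx_conjg //.
Qed.

Variables (k : nat) (lam : 'I_k -> C) (m : 'I_k -> nat).

Lemma conjinv_D : (forall i, lam i != 0) ->
  invmx (conj_mx (\mxdiag_i jordan_block (lam i) (m i))) =
  \mxdiag_i invmx (jordan_block (lam i)^* (m i)).
Proof.
move=> l0; rewrite /conj_mx map_mxdiag.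
have -> : \mxdiag_i map_mx Num.conj (jordan_block (lam i) (m i)) =
          \mxdiag_i jordan_block (lam i)^* (m i).
  by apply: eq_mxdiag => i; rewrite -conj_jb.
have l0' i : (lam i)^* != 0 by rewrite conjC_eq0.
by case: (mxdiag_inv (fun i => unit_jb (m i) (l0' i))).
Qed.

End CC.

Section RankD.
Variable F : fieldType.
Lemma rank_D k (lam : 'I_k -> F) (m : 'I_k -> nat) mu p :
  \rank ((\mxdiag_i jordan_block (lam i) (m i) - mu%:M) ^+ p) =
  \sum_i (if lam i == mu then m i - p else m i)%N.
Proof.
by rewrite mxdiag_subS mxdiag_exp rank_mxdiag; apply: eq_bigr => i _; rewrite rank_jb.
Qed.
End RankD.


Local Open Scope nat_scope.
Section Comb.

Lemma count_eq k (x y : 'I_k -> bool) (m : 'I_k -> nat) : (forall i, 0 < m i) ->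
  (forall p, \sum_i (if x i then m i - p else m i) = \sum_i (if y i then m i - p else m i)) ->
  forall s, \sum_i (x i && (m i == s) : nat) = \sum_i (y i && (m i == s) : nat).
Proof.
move=> mpos hF.
pose G (z : 'I_k -> bool) p := \sum_i (z i && (p < m i) : nat).
pose H (z : 'I_k -> bool) s := \sum_i (z i && (m i == s) : nat).
have FG (z : 'I_k -> bool) p : \sum_i (if z i then m i - p else m i) =
    \sum_i (if z i then m i - p.+1 else m i) + G z p.
  rewrite /G -(big_split _ _ _ (fun i => if z i then m i - p.+1 else m i) (fun i => (z i && (p < m i) : nat))) /=.
  apply eq_bigr => i _ /=.
  by case: (z i) => /=; case: (ltnP p (m i)) => h /=; lia.
have GH (z : 'I_k -> bool) p : G z p = H z p.+1 + G z p.+1.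
  rewrite /G /H -(big_split _ _ _ (fun i => (z i && (m i == p.+1) : nat)) (fun i => (z i && (p.+1 < m i) : nat))) /=.
  apply eq_bigr => i _ /=.
  by case: (z i) => /=; case: (ltngtP p.+1 (m i)) => h /=; lia.
have Geq p : G x p = G y p.
  have e1 := hF p; have e2 := hF p.+1; rewrite (FG x p) (FG y p) in e1; lia.
case=> [|s].
  by rewrite !big1 // => i _; rewrite (_ : (m i == 0) = false) ?andbF //; have := mpos i; lia.
by have := GH x s; have := GH y s; rewrite /H Geq Geq; lia.
Qed.

Lemma card_sum k (P : 'I_k -> bool) : #|[set i | P i]| = \sum_i (P i : nat).
Proof.
rewrite -sum1_card big_mkcond /=; apply: eq_bigr => i _.
by rewrite inE; case: (P i).
Qed.


Lemma partition_of_invol k (sg : 'I_k -> 'I_k) : involutive sg ->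
  partition (equivalence_partition (fun i j => (j == i) || (j == sg i)) [set: 'I_k]) [set: 'I_k] /\
  forall B, B \in equivalence_partition (fun i j => (j == i) || (j == sg i)) [set: 'I_k] ->
    exists i, B = [set i; sg i].
Proof.
move=> sgK; split.
  apply: equivalence_partitionP => x y z _ _ _; split; first by rewrite eqxx.
  case/orP => /eqP ->; first by [].
  by rewrite sgK orbC.
by move=> B /imsetP [i _ ->]; exists i; apply/setP => j; rewrite !inE.
Qed.

Lemma pairing k (T : eqType) (lam : 'I_k -> T) (m : 'I_k -> nat) (phi : T -> T) (U : pred T) :
  involutive phi -> (forall i, U (lam i) -> phi (lam i) = lam i) ->
  (forall i, ~~ U (lam i) -> phi (lam i) != lam i) ->
  (forall z s, #|[set i | (lam i == z) && (m i == s)]| =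
               #|[set i | (lam i == phi z) && (m i == s)]|) ->
  exists P : {set {set 'I_k}}, partition P [set: 'I_k] /\
    forall B, B \in P ->
      (exists i, B = [set i] /\ U (lam i)) \/
      (exists i j, i != j /\ B = [set i; j] /\ m j = m i /\
                   lam j = phi (lam i) /\ ~~ U (lam i)).
Proof.
move=> phiK hU hnU hcard.
pose cls z s := [set j | (lam j == z) && (m j == s)].
pose sg i := if U (lam i) then i
  else nth i (enum (cls (phi (lam i)) (m i))) (index i (enum (cls (lam i) (m i)))).
have iS i : i \in enum (cls (lam i) (m i)) by rewrite mem_enum !inE !eqxx.
have ltS i : (index i (enum (cls (lam i) (m i))) < size (enum (cls (phi (lam i)) (m i))))%N.
  by rewrite -cardE -hcard cardE index_mem.
have sgT i : ~~ U (lam i) -> sg i \in cls (phi (lam i)) (m i).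
  by move=> nU; rewrite /sg (negbTE nU) -mem_enum mem_nth.
have sgl i : ~~ U (lam i) -> lam (sg i) = phi (lam i) /\ m (sg i) = m i.
  by move=> /sgT; rewrite inE => /andP[/eqP -> /eqP ->].
have sgnU i : ~~ U (lam i) -> ~~ U (lam (sg i)).
  move=> nU; have [e _] := sgl i nU; apply/negP => uj.
  have := hU _ uj; rewrite e phiK => e2.
  by move: (hnU i nU); rewrite -e2 eqxx.
have sgK : involutive sg.
  move=> i; case nU: (U (lam i)); first by rewrite /sg nU nU.
  move/negbT: nU => nU; have [e1 e2] := sgl i nU.
  rewrite {1}/sg (negbTE (sgnU i nU)) e1 e2 phiK.
  rewrite /sg (negbTE nU) index_uniq ?enum_uniq //.
  rewrite (set_nth_default i) ?nth_index //.
  by rewrite -cardE hcard cardE.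
have [hP hB] := partition_of_invol sgK.
exists (equivalence_partition (fun i j => (j == i) || (j == sg i)) [set: 'I_k]); split => //.
move=> B /hB [i ->]; case nU: (U (lam i)).
  left; exists i; split => //; rewrite /sg nU; apply/setP => j; rewrite !inE orbb //.
right; exists i, (sg i); move/negbT: nU => nU; have [e1 e2] := sgl i nU.
do 4?split => //.
by apply: contra (hnU i nU) => /eqP e; rewrite -e1 -e.
Qed.


Lemma pick2 k (a b x : 'I_k) : a != b -> x \in [set a; b] ->
  odflt x [pick j in [set a; b] | j != x] = (if x == a then b else a).
Proof.
move=> ne; rewrite !inE => hx.
case: pickP => [j /andP[]|none].
  rewrite !inE => hj jx /=.
  case: (orP hx) => /eqP ex; subst x; rewrite ?eqxx.
    by case/orP: hj => /eqP ej //; move: jx; rewrite ej eqxx.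
  rewrite eq_sym (negbTE ne).
  by case/orP: hj => /eqP ej //; move: jx; rewrite ej eqxx.
case: (orP hx) => /eqP ex; subst x.
  by have := none b; rewrite !inE eqxx orbT eq_sym ne.
by have := none a; rewrite !inE eqxx ne.
Qed.

Lemma pick1 k (x : 'I_k) : odflt x [pick j in [set x] | j != x] = x.
Proof. by case: pickP => [j /andP[]|//]; rewrite inE => ->. Qed.

Lemma unpair k (T : eqType) (lam : 'I_k -> T) (m : 'I_k -> nat) (phi : T -> T) (U : pred T) :
  involutive phi -> (forall z, U z -> phi z = z) ->
  (exists P : {set {set 'I_k}}, partition P [set: 'I_k] /\
    forall B, B \in P ->
      (exists i, B = [set i] /\ U (lam i)) \/
      (exists i j, i != j /\ B = [set i; j] /\ m j = m i /\
                   lam j = phi (lam i) /\ ~~ U (lam i))) ->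
  exists sg : 'I_k -> 'I_k, injective sg /\
    forall i, lam (sg i) = phi (lam i) /\ m (sg i) = m i.
Proof.
move=> phiK hU [P [/and3P[/eqP cP tP _] hB]].
pose sg i := odflt i [pick j in pblock P i | j != i].
have PB i : pblock P i \in P by apply: pblock_mem; rewrite cP inE.
have iB i : i \in pblock P i by rewrite mem_pblock cP inE.
have key i : (pblock P i = [set i] /\ U (lam i)) \/
   (exists a b, a != b /\ pblock P i = [set a; b] /\ m b = m a /\ lam b = phi (lam a)).
  case: (hB _ (PB i)) => [[i0 [eB Ui0]] | [a [b [ne [eB [em [el nU]]]]]]].
    by left; have := iB i; rewrite eB inE => /eqP ei; subst i0.
  by right; exists a, b.
have sgE i : (sg i = i /\ U (lam i)) \/
   (exists a b, a != b /\ pblock P i = [set a; b] /\ m b = m a /\ lam b = phi (lam a) /\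
     sg i = if i == a then b else a).
  case: (key i) => [[eB Ui]|[a [b [ne [eB [em el]]]]]].
    by left; rewrite /sg eB pick1.
  right; exists a, b; do 4?split => //.
  by rewrite /sg eB pick2 // -eB.
have sgK : involutive sg.
  move=> i; case: (sgE i) => [[e _]|]; first by rewrite e e.
  move=> [a [b [ne [eB [_ [_ ei]]]]]].
  have eB' : pblock P (sg i) = [set a; b].
    apply: def_pblock => //; first by rewrite -eB.
    by rewrite ei; case: (i == a); rewrite !inE eqxx ?orbT.
  have isg : i \in [set a; b] by rewrite -eB.
  rewrite {1}/sg eB' pick2 //; last by rewrite ei; case: (i == a); rewrite !inE eqxx ?orbT.
  rewrite ei; case: (eqVneq i a) => [ia|ia].
    by rewrite eq_sym (negbTE ne).
  by move: isg; rewrite !inE (negbTE ia) eqxx /= => /eqP.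
exists sg; split; first exact: inv_inj.
move=> i; case: (sgE i) => [[-> Ui]|[a [b [ne [eB [em [el ei]]]]]]]; first by rewrite hU.
have : i \in [set a; b] by rewrite -eB.
rewrite ei !inE; case: (eqVneq i a) => [-> _|ia /= /eqP ->]; first by [].
by rewrite el phiK.
Qed.

End Comb.
Local Open Scope ring_scope.


Section Main.
Variable C : numClosedFieldType.

Lemma sim_SL n (X Y : 'M[C]_n) : sim X Y ->
  exists h : 'M[C]_n, in_SL h /\ h *m X *m invmx h = Y.
Proof.
move=> [Q /andP[uQ /eqP e]].
case: n => [|n] in X Y Q uQ e *.
  by exists Q; split => //; rewrite /in_SL det_mx00.
have d0 : \det Q != 0 by rewrite -unitfE -unitmxE.
set a := n.+1.-root ((\det Q)^-1).
have ha : a ^+ n.+1 = (\det Q)^-1 by rewrite /a rootCK.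
have a0 : a != 0.
  apply/eqP => a0; move: ha; rewrite a0 expr0n /= => /esym /eqP.
  by rewrite invr_eq0 (negbTE d0).
have dh : \det (a *: Q) = 1 by rewrite detZ ha mulVf.
exists (a *: Q); split => //.
rewrite invmxZ ?unitmxE ?dh ?unitr1 // -scalemxAl -scalemxAl -scalemxAr scalerA.
by rewrite mulfV // scale1r.
Qed.

Lemma mainC n k (A : 'M[C]_n) (lam : 'I_k -> C) (m : 'I_k -> nat) :
  in_SL A ->
  has_jordan_form A lam m ->
  (forall i, lam i != 0) ->
  c_reversible A <->
  exists P : {set {set 'I_k}},
    partition P [set: 'I_k] /\
    forall B, B \in P ->
      (exists i, B = [set i] /\ `|lam i| = 1) \/
      (exists i j, i != j /\ B = [set i; j] /\ m j = m i /\
                   lam j = (Num.conj (lam i))^-1 /\ `|lam i| != 1).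
Proof.
move=> SL [mpos [hn [P [uP hPA]]]] l0.
case: n / hn in A SL P uP hPA *.
rewrite castmx_id in hPA.
set D := \mxdiag_i jordan_block (lam i) (m i) in hPA.
set E := \mxdiag_i jordan_block (phi (lam i)) (m i).
have sAD : sim A D by exists P; rewrite /simb uP hPA eqxx.
have sDE : sim (invmx (conj_mx D)) E.
  rewrite /D conjinv_D //; apply: sim_mxdiag => i; apply: jinv_sim; [by rewrite conjC_eq0 | exact: mpos].
pose U (z : C) := `|z| == 1.
have hU z : U z -> phi z = z by move/eqP; exact: phi_id.
split.
  move=> [h [hSL hh]].
  have sAi : sim A (invmx (conj_mx A)).
    by exists h; rewrite /simb unitmxE hSL unitr1 hh eqxx.
  have sDE' : sim D E.
    apply: sim_trans (sim_sym sAD) _; apply: sim_trans sAi _.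
    exact: sim_trans (sim_conjinv sAD) sDE.
  have rk mu p : \sum_i (if lam i == mu then m i - p else m i)%N =
                 \sum_i (if phi (lam i) == mu then m i - p else m i)%N.
    rewrite -!rank_D; exact: sim_rank.
  have cnt z s : #|[set i | (lam i == z) && (m i == s)]| =
                 #|[set i | (lam i == phi z) && (m i == s)]|.
    rewrite !card_sum (count_eq mpos (rk z)); apply: eq_bigr => i _.
    congr (nat_of_bool (_ && _)); apply/eqP/eqP => [<-|->]; by rewrite phiK.
  have [Q [hQ hB]] := pairing (@phiK C) (fun i => hU (lam i))
     (fun i nU => phi_neq (l0 i) nU) cnt.
  exists Q; split => // B /hB [[i [-> /eqP ui]]|[i [j [ij [-> [mj [lj nU]]]]]]].
    by left; exists i.
  by right; exists i, j.
move=> hP.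
have hP' : exists P : {set {set 'I_k}}, partition P [set: 'I_k] /\
    forall B, B \in P ->
      (exists i, B = [set i] /\ U (lam i)) \/
      (exists i j, i != j /\ B = [set i; j] /\ m j = m i /\
                   lam j = phi (lam i) /\ ~~ U (lam i)).
  case: hP => Q [hQ hB]; exists Q; split => // B /hB [[i [-> /eqP ui]]|h].
    by left; exists i.
  by right.
have [sg [sginj hsg]] := unpair (@phiK C) hU hP'.
pose f i (a b : nat) := if a == b then lam i else if b == a.+1 then 1 else 0.
have eD : D = \mxdiag_i \matrix_(a < m i, b < m i) f i a b.
  by apply: eq_mxdiag => i; apply/matrixP => a b; rewrite !mxE.
have eE : E = \mxdiag_i \matrix_(a < m i, b < m i) f (sg i) a b.
  apply: eq_mxdiag => i; apply/matrixP => a b; rewrite !mxE /f.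
  by have [-> _] := hsg i.
have sDE2 : sim D E.
  rewrite eD eE; apply: sim_perm_mxdiag => // i; by have [_ ->] := hsg i.
have sAi : sim A (invmx (conj_mx A)).
  apply: (sim_trans sAD); apply: (sim_trans sDE2).
  apply: (sim_trans (sim_sym sDE)); exact: (sim_sym (sim_conjinv sAD)).
have [h [hSL hh]] := sim_SL sAi.
by exists h.
Qed.

End Main.

Unset Implicit Arguments.

Theorem proposition3p1 (R : realType) (n k : nat) (A : 'M[R[i]]_n)
  (lam : 'I_k -> R[i]) (m : 'I_k -> nat) :
  in_SL A ->
  has_jordan_form A lam m ->
  (forall i, lam i != 0) ->
  c_reversible A <->
  exists P : {set {set 'I_k}},
    partition P [set: 'I_k] /\
    forall B, B \in P ->
      (exists i, B = [set i] /\ `|lam i| = 1) \/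
      (exists i j, i != j /\ B = [set i; j] /\ m j = m i /\
                   lam j = (Num.conj (lam i))^-1 /\ `|lam i| != 1).
Proof. exact: mainC. Qed.
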